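(* Take maps of event structures $f: A\to C$ and $g: B \to C$, and take their pullback $A\circledast B$. Suppose moreover that in the pullback, we have $[(a, b)]_x \rightarrow [(a', b')]_x$. Then necessarily, $a\rightarrow a'$ in $A$ or $b\rightarrow b'$ in $B$.
   Context: For events $e,e'$ of an event structure, $e \rightarrow e'$ denotes immediate causal dependency: $e<e'$ and no event lies strictly between them. The pullback $A\circledast B$ of $f:A\to C$ and $g:B\to C$ in the category of event structures and (total) maps is constructed as follows: in the product stable family $\mathcal{C}(A)\times\mathcal{C}(B)$, restrict to the set $R$ of pairs $(a,b)$ with $f a = g b$, and take the event structure of primes of the resulting stable family. Its events are primes $[(a,b)]_x$, where $x$ is a configuration of the restricted stable family containing $(a,b)$ and $[(a,b)]_x=\{e\in x\mid e\le_x (a,b)\}$ with $e\le_x e'$ iff every sub-configuration of $x$ containing $e'$ contains $e$; causality is inclusion and a finite set of primes is consistent iff its union is a configuration. *)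

(* Defs.v *)
From Stdlib Require Import List.
Set Implicit Arguments.

Definition subset {E : Type} (X Y : E -> Prop) : Prop := forall e, X e -> Y e.
Definition set_eq {E : Type} (X Y : E -> Prop) : Prop := forall e, X e <-> Y e.
Definition strict_subset {E : Type} (X Y : E -> Prop) : Prop :=
  subset X Y /\ ~ subset Y X.
Definition finite_set {E : Type} (X : E -> Prop) : Prop :=
  exists l : list E, forall e, X e <-> In e l.
Definition image {E F : Type} (f : E -> F) (X : E -> Prop) : F -> Prop :=
  fun c => exists e, X e /\ f e = c.

Record event_structure := {
  ev : Type;
  leq : ev -> ev -> Prop;
  con : (ev -> Prop) -> Prop;
  leq_refl : forall e, leq e e;
  leq_trans : forall e1 e2 e3, leq e1 e2 -> leq e2 e3 -> leq e1 e3;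
  leq_antisym : forall e1 e2, leq e1 e2 -> leq e2 e1 -> e1 = e2;
  down_finite : forall e, finite_set (fun e' => leq e' e);
  con_finite : forall X, con X -> finite_set X;
  con_single : forall e, con (fun e' => e' = e);
  con_sub : forall X Y, subset Y X -> con X -> con Y;
  con_down : forall X e e', con X -> X e' -> leq e e' ->
             con (fun d => X d \/ d = e)
}.

Definition lt_ev (A : event_structure) (a a' : ev A) : Prop :=
  leq A a a' /\ a <> a'.

Definition imm (A : event_structure) (a a' : ev A) : Prop :=
  lt_ev A a a' /\ ~ (exists c, lt_ev A a c /\ lt_ev A c a').

Definition config (A : event_structure) (x : ev A -> Prop) : Prop :=
  finite_set x /\ con A x /\
  (forall e e', x e' -> leq A e e' -> x e).

Record es_map (A C : event_structure) := {
  mfun :> ev A -> ev C;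
  mfun_config : forall x, config A x -> config C (image mfun x);
  mfun_inj : forall x, config A x ->
             forall a a', x a -> x a' -> mfun a = mfun a' -> a = a'
}.

Section Pullback.
Variables (A B C : event_structure) (f : es_map A C) (g : es_map B C).

Definition pi1 (x : ev A * ev B -> Prop) : ev A -> Prop := image fst x.
Definition pi2 (x : ev A * ev B -> Prop) : ev B -> Prop := image snd x.

(** Configurations of the product stable family C(A) x C(B) restricted to
    R = {(a,b) | f a = g b}.  (Events of the product involving the undefined
    component * are excluded by R, so we work with genuine pairs.) *)
Definition pb_config (x : ev A * ev B -> Prop) : Prop :=
  finite_set x /\
  (forall p, x p -> f (fst p) = g (snd p)) /\
  config A (pi1 x) /\ config B (pi2 x) /\
  (forall p p', x p -> x p' -> (fst p = fst p' \/ snd p = snd p') -> p = p') /\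
  (forall p p', x p -> x p' -> p <> p' ->
     exists y, subset y x /\ config A (pi1 y) /\ config B (pi2 y) /\
               (y p <-> ~ y p')).

(** The prime [e]_x = {e' in x | e' <=_x e}, where e' <=_x e iff every
    sub-configuration of x containing e contains e'. *)
Definition prime (x : ev A * ev B -> Prop) (e : ev A * ev B) : ev A * ev B -> Prop :=
  fun e' => x e' /\
    (forall y, pb_config y -> subset y x -> y e -> y e').

(** Events of the pullback A circledast B: the primes [e]_x. *)
Definition pb_event (P : ev A * ev B -> Prop) : Prop :=
  exists x e, pb_config x /\ x e /\ set_eq P (prime x e).

(** Immediate causality in the pullback (causality is inclusion of primes). *)
Definition pb_imm (P P' : ev A * ev B -> Prop) : Prop :=
  strict_subset P P' /\
  ~ (exists Q, pb_event Q /\ strict_subset P Q /\ strict_subset Q P').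

End Pullback.

(* Main.v *)
Require Import Defs.
From Stdlib Require Import List Classical.
Set Implicit Arguments.
Unset Strict Implicit.

Lemma fin_sub {E : Type} {X Y : E -> Prop} : finite_set X -> subset Y X -> finite_set Y.
Proof.
  intros [l Hl] HYX.
  assert (H : forall e, Y e -> In e l) by (intros e He; apply Hl; auto).
  clear Hl HYX. revert Y H. induction l as [|h t IH]; intros Y H.
  - exists nil. intros e; split; [intro He; exact (H e He) | intros []].
  - destruct (IH (fun e => Y e /\ e <> h)) as [l' Hl'].
    { intros e [He Hne]. destruct (H e He); [congruence|auto]. }
    destruct (classic (Y h)) as [Yh|nYh].
    + exists (h :: l'). intros e; split.
      * intro He. destruct (classic (e = h)) as [->|ne];
          [left; reflexivity | right; apply Hl'; auto].
      * intros [<-|Hin]; [exact Yh| apply Hl' in Hin; tauto].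
    + exists l'. intros e; split.
      * intro He. apply Hl'. split; auto. intro; subst; contradiction.
      * intro Hin; apply Hl' in Hin; tauto.
Qed.

Section S.
Variables (A B C : event_structure) (f : es_map A C) (g : es_map B C).

Definition lex (x : ev A * ev B -> Prop) (p q : ev A * ev B) : Prop :=
  forall y, pb_config f g y -> subset y x -> y q -> y p.

Lemma cfgA_inter (x y y0 : ev A * ev B -> Prop) :
  (forall p p', x p -> x p' -> (fst p = fst p' \/ snd p = snd p') -> p = p') ->
  subset y x -> subset y0 x -> config A (pi1 A B y) -> config A (pi1 A B y0) ->
  config A (pi1 A B (fun q => y0 q /\ y q)).
Proof.
  intros Hinj Hyx Hy0x (Fy & Cy & Dy) (F0 & C0 & D0).
  assert (Hs : subset (pi1 A B (fun q => y0 q /\ y q)) (pi1 A B y)).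
  { intros e (q & [H0 H1] & Eq). exists q; auto. }
  split; [|split].
  - exact (fin_sub Fy Hs).
  - exact (con_sub A Hs Cy).
  - intros e e' (q & [H0 H1] & Eq) Hle. subst e'.
    assert (P0 : pi1 A B y0 (fst q)) by (exists q; auto).
    assert (P1 : pi1 A B y (fst q)) by (exists q; auto).
    destruct (D0 e (fst q) P0 Hle) as (q0 & Hq0 & E0).
    destruct (Dy e (fst q) P1 Hle) as (q1 & Hq1 & E1).
    assert (q0 = q1) by (apply Hinj; auto; left; congruence). subst.
    exists q1; auto.
Qed.

Lemma cfgB_inter (x y y0 : ev A * ev B -> Prop) :
  (forall p p', x p -> x p' -> (fst p = fst p' \/ snd p = snd p') -> p = p') ->
  subset y x -> subset y0 x -> config B (pi2 A B y) -> config B (pi2 A B y0) ->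
  config B (pi2 A B (fun q => y0 q /\ y q)).
Proof.
  intros Hinj Hyx Hy0x (Fy & Cy & Dy) (F0 & C0 & D0).
  assert (Hs : subset (pi2 A B (fun q => y0 q /\ y q)) (pi2 A B y)).
  { intros e (q & [H0 H1] & Eq). exists q; auto. }
  split; [|split].
  - exact (fin_sub Fy Hs).
  - exact (con_sub B Hs Cy).
  - intros e e' (q & [H0 H1] & Eq) Hle. subst e'.
    assert (P0 : pi2 A B y0 (snd q)) by (exists q; auto).
    assert (P1 : pi2 A B y (snd q)) by (exists q; auto).
    destruct (D0 e (snd q) P0 Hle) as (q0 & Hq0 & E0).
    destruct (Dy e (snd q) P1 Hle) as (q1 & Hq1 & E1).
    assert (q0 = q1) by (apply Hinj; auto; right; congruence). subst.
    exists q1; auto.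
Qed.

Lemma sub_pb x y : pb_config f g x -> subset y x -> config A (pi1 A B y) ->
  config B (pi2 A B y) -> pb_config f g y.
Proof.
  intros (Hfin & Hfg & HA & HB & Hinj & Hsep) Hyx HAy HBy.
  refine (conj _ (conj _ (conj HAy (conj HBy (conj _ _))))).
  - exact (fin_sub Hfin Hyx).
  - intros p Hp; apply Hfg, Hyx, Hp.
  - intros p p' Hp Hp' E; apply Hinj; auto.
  - intros p p' Hp Hp' Hne.
    destruct (Hsep p p' (Hyx p Hp) (Hyx p' Hp') Hne) as (y0 & Hy0x & HA0 & HB0 & Hiff).
    exists (fun q => y0 q /\ y q). refine (conj _ (conj _ (conj _ _))).
    + intros q [_ H]; exact H.
    + exact (cfgA_inter Hinj Hyx Hy0x HAy HA0).
    + exact (cfgB_inter Hinj Hyx Hy0x HBy HB0).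
    + simpl. tauto.
Qed.

Lemma lex_trans x p q r : lex x p q -> lex x q r -> lex x p r.
Proof. intros H1 H2 y Hy Hyx Hr. apply (H1 y Hy Hyx). apply (H2 y Hy Hyx Hr). Qed.

Lemma step_le x r p : pb_config f g x -> x r -> x p ->
  (leq A (fst r) (fst p) \/ leq B (snd r) (snd p)) -> lex x r p.
Proof.
  intros Hx Hr Hp Hst y Hy Hyx Hyp.
  destruct Hx as (_&_&_&_&Hinj&_). destruct Hy as (_&_&HAy&HBy&_).
  destruct Hst as [H|H].
  - destruct HAy as (_&_&Dy).
    assert (P : pi1 A B y (fst p)) by (exists p; auto).
    destruct (Dy _ _ P H) as (q & Hq & E).
    assert (q = r) by (apply Hinj; auto; left; auto). subst; auto.
  - destruct HBy as (_&_&Dy).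
    assert (P : pi2 A B y (snd p)) by (exists p; auto).
    destruct (Dy _ _ P H) as (q & Hq & E).
    assert (q = r) by (apply Hinj; auto; right; auto). subst; auto.
Qed.

Lemma lex_antisym x p q : pb_config f g x -> x p -> x q ->
  lex x p q -> lex x q p -> p = q.
Proof.
  intros Hx Hp Hq H1 H2. apply NNPP; intro Hne.
  pose proof Hx as (_&_&_&_&_&Hsep).
  destruct (Hsep p q Hp Hq Hne) as (y0 & Hy0x & HA0 & HB0 & Hiff).
  pose proof (sub_pb Hx Hy0x HA0 HB0) as Hy0.
  specialize (H1 y0 Hy0 Hy0x). specialize (H2 y0 Hy0 Hy0x). tauto.
Qed.

Lemma between x p p' q : pb_config f g x -> x p -> x p' -> x q ->
  lex x p q -> lex x q p' -> q <> p -> q <> p' ->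
  ~ pb_imm f g (prime f g x p) (prime f g x p').
Proof.
  intros Hx Hp Hp' Hq H1 H2 N1 N2 [_ Him]. apply Him.
  exists (prime f g x q). split; [|split].
  - exists x, q. split; [exact Hx|split; [exact Hq|]]. intro; tauto.
  - split.
    + intros e [He Hl]. split; [exact He|]. exact (lex_trans Hl H1).
    + intro Hs. destruct (Hs q) as [_ Hl]. { split; [exact Hq|]. intros y _ _ Hy; exact Hy. }
      apply N1. apply (lex_antisym Hx Hq Hp Hl H1).
  - split.
    + intros e [He Hl]. split; [exact He|]. exact (lex_trans Hl H2).
    + intro Hs. destruct (Hs p') as [_ Hl]. { split; [exact Hp'|]. intros y _ _ Hy; exact Hy. }
      apply N2. apply (lex_antisym Hx Hq Hp' H2 Hl).
Qed.

End S.

Theorem mainTheorem4 (A B C : event_structure) (f : es_map A C) (g : es_map B C)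
  (x : ev A * ev B -> Prop) (a a' : ev A) (b b' : ev B) :
  pb_config f g x -> x (a, b) -> x (a', b') ->
  pb_imm f g (prime f g x (a, b)) (prime f g x (a', b')) ->
  imm A a a' \/ imm B b b'.
Proof.
  intros Hx Hab Hab' Himm.
  pose proof Himm as [[Hsub Hnsub] _].
  assert (Hne : (a, b) <> (a', b')).
  { intro E. rewrite E in Hnsub. apply Hnsub. intros e h; exact h. }
  assert (Hle : lex f g x (a, b) (a', b')).
  { destruct (Hsub (a, b)) as [_ Hl]; [split; [exact Hab| intros y _ _ Hy; exact Hy]|exact Hl]. }
  pose proof Hx as (Hfin & Hfg & HAx & HBx & Hinj & Hsep).
  set (D := fun p => x p /\ (p = (a', b') \/ exists q, x q /\ q <> (a', b') /\
             (leq A (fst q) a' \/ leq B (snd q) b') /\ lex f g x p q)).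
  assert (HDx : subset D x) by (intros p [H _]; exact H).
  assert (Hstep : forall r p, x r -> D p ->
            (leq A (fst r) (fst p) \/ leq B (snd r) (snd p)) -> D r).
  { intros r p Hr [Hp Hc] Hst. split; [exact Hr|].
    destruct (classic (r = (a', b'))) as [E|Nr]; [left; exact E|right].
    destruct Hc as [-> | (q & Hq & Nq & Hqs & Hl)].
    - exists r. split; [exact Hr|split; [exact Nr|split; [exact Hst|]]].
      intros y _ _ h; exact h.
    - exists q. split; [exact Hq|split; [exact Nq|split; [exact Hqs|]]].
      exact (lex_trans (step_le Hx Hr Hp Hst) Hl). }
  assert (HDA : config A (pi1 A B D)).
  { destruct HAx as (FA & CA & DA).
    assert (Hs : subset (pi1 A B D) (pi1 A B x)) by (intros e (q & Hq & E); exists q; split; [apply HDx|]; auto).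
    split; [exact (fin_sub FA Hs)|split; [exact (con_sub A Hs CA)|]].
    intros e e' (p & Hp & E) Hl. subst e'.
    assert (P : pi1 A B x (fst p)) by (exists p; split; [apply HDx|]; auto).
    destruct (DA _ _ P Hl) as (r & Hr & Er).
    exists r. split; [|exact Er]. apply (Hstep r p Hr Hp). left. rewrite Er; exact Hl. }
  assert (HDB : config B (pi2 A B D)).
  { destruct HBx as (FB & CB & DB).
    assert (Hs : subset (pi2 A B D) (pi2 A B x)) by (intros e (q & Hq & E); exists q; split; [apply HDx|]; auto).
    split; [exact (fin_sub FB Hs)|split; [exact (con_sub B Hs CB)|]].
    intros e e' (p & Hp & E) Hl. subst e'.
    assert (P : pi2 A B x (snd p)) by (exists p; split; [apply HDx|]; auto).
    destruct (DB _ _ P Hl) as (r & Hr & Er).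
    exists r. split; [|exact Er]. apply (Hstep r p Hr Hp). right. rewrite Er; exact Hl. }
  assert (HD : pb_config f g D) by exact (sub_pb Hx HDx HDA HDB).
  assert (HDab : D (a, b)).
  { apply (Hle D HD HDx). split; [exact Hab'| left; reflexivity]. }
  destruct HDab as [_ [E | (q & Hq & Nq & Hqs & Hlq)]]; [contradiction|].
  destruct (classic (q = (a, b))) as [Eq | Nqab].
  2:{ exfalso. refine (between Hx Hab Hab' Hq Hlq _ Nqab Nq Himm).
      exact (step_le Hx Hq Hab' Hqs). }
  subst q. simpl in Hqs.
  assert (Hmid : forall r, x r -> r <> (a, b) -> r <> (a', b') ->
            (leq A a (fst r) \/ leq B b (snd r)) ->
            (leq A (fst r) a' \/ leq B (snd r) b') -> False).
  { intros r Hr N1 N2 H1 H2.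
    apply (between Hx Hab Hab' Hr (step_le Hx Hab Hr H1) (step_le Hx Hr Hab' H2) N1 N2 Himm). }
  destruct Hqs as [HA | HB].
  - left. assert (Na : a <> a').
    { intro Ea. apply Hne. apply Hinj; auto. }
    split; [split; assumption|].
    intros (c & [Hac Nac] & [Hca Nca]).
    destruct HAx as (_ & _ & DA).
    assert (P : pi1 A B x a') by (exists (a', b'); auto).
    destruct (DA c a' P Hca) as (r & Hr & Er).
    apply (Hmid r Hr).
    + intro E; subst r; simpl in Er; congruence.
    + intro E; subst r; simpl in Er; congruence.
    + left; rewrite Er; exact Hac.
    + left; rewrite Er; exact Hca.
  - right. assert (Nb : b <> b').
    { intro Eb. apply Hne. apply Hinj; auto. }
    split; [split; assumption|].
    intros (c & [Hac Nac] & [Hca Nca]).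
    destruct HBx as (_ & _ & DB).
    assert (P : pi2 A B x b') by (exists (a', b'); auto).
    destruct (DB c b' P Hca) as (r & Hr & Er).
    apply (Hmid r Hr).
    + intro E; subst r; simpl in Er; congruence.
    + intro E; subst r; simpl in Er; congruence.
    + right; rewrite Er; exact Hac.
    + right; rewrite Er; exact Hca.
Qed.
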